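(* For every real $x$ the following series representations hold (each series converging): $$\operatorname{erf}(x)=\frac{x}{\sqrt{\pi}}+\frac{x}{\sqrt{\pi}}e^{-x^2}+\frac{x^3}{\sqrt{\pi}}\sum_{k=0}^{\infty}\frac{(-1)^k(2k+1)x^{2k}}{(2k+3)(k+1)!};$$ $$\operatorname{erf}(x)=\frac{x}{\sqrt{\pi}}+\frac{x}{\sqrt{\pi}}\Big[1+\frac{x^2}{3}\Big]e^{-x^2}+\frac{x^5}{6\sqrt{\pi}}\sum_{k=0}^{\infty}\frac{(-1)^k(2k+1)(k+1)!\,x^{2k}}{(2k+5)\prod_{r=1}^{k}\Big[\sum_{i=1}^{r}(2i+1)\Big]};$$ $$\operatorname{erf}(x)=\frac{x}{\sqrt{\pi}}\Big[1-\frac{x^2}{30}\Big]+\frac{x}{\sqrt{\pi}}\Big[1+\frac{11x^2}{30}+\frac{x^4}{15}\Big]e^{-x^2}+\frac{x^7}{60\sqrt{\pi}}\sum_{k=0}^{\infty}\frac{(-1)^k(2k+1)(2k+3)(k+1)!\,x^{2k}}{3(2k+7)\prod_{r=2}^{k+1}\Big[2\sum_{i=2}^{r}i\Big]},$$ where empty products equal $1$.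
   Context: $\operatorname{erf}(x)=\frac{2}{\sqrt{\pi}}\int_0^x e^{-\lambda^2}\,d\lambda$. *)

(* Defs.v *)
From Stdlib Require Import Reals List Factorial.
From Coquelicot Require Import Coquelicot.
Open Scope R_scope.

Definition erf (x : R) : R :=
  2 / sqrt PI * RInt (fun l => exp (- l ^ 2)) 0 x.

(* finite product / sum over the integer range r = m..n (empty if n < m) *)
Definition prodR (m n : nat) (f : nat -> R) : R :=
  fold_right (fun r acc => f r * acc) 1 (seq m (S n - m)).
Definition sumR (m n : nat) (f : nat -> R) : R :=
  fold_right (fun r acc => f r + acc) 0 (seq m (S n - m)).

Definition erf_series1 (x : R) (k : nat) : R :=
  (-1) ^ k * (2 * INR k + 1) * x ^ (2 * k)
  / ((2 * INR k + 3) * INR (fact (k + 1))).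

Definition erf_series2 (x : R) (k : nat) : R :=
  (-1) ^ k * (2 * INR k + 1) * INR (fact (k + 1)) * x ^ (2 * k)
  / ((2 * INR k + 5) * prodR 1 k (fun r => sumR 1 r (fun i => 2 * INR i + 1))).

Definition erf_series3 (x : R) (k : nat) : R :=
  (-1) ^ k * (2 * INR k + 1) * (2 * INR k + 3) * INR (fact (k + 1)) * x ^ (2 * k)
  / (3 * (2 * INR k + 7) * prodR 2 (k + 1) (fun r => 2 * sumR 2 r (fun i => INR i))).

(* Main.v *)
Require Import Defs.
From Stdlib Require Import Reals Lra Lia List Factorial.
From Coquelicot Require Import Coquelicot.
Open Scope R_scope.

Definition aa n := (-1)^n / (INR (fact n) * (2 * INR n + 1)).
Definition ea n := (-1)^n / INR (fact n).

Lemma lin2 (a b : nat -> R) (la lb c d : R) : is_series a la -> is_series b lb ->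
  is_series (fun n => c * a n + d * b n) (c * la + d * lb).
Proof. intros Ha Hb. exact (is_series_plus _ _ _ _ (is_series_scal c _ _ Ha) (is_series_scal d _ _ Hb)). Qed.

Lemma shift0 (u : nat -> R) (L c : R) : is_series u L ->
  is_series (fun n => match n with O => c | S m => u m end) (c + L).
Proof. intros H. apply is_series_decr_1.
  change (is_series (fun k => u k) (c + L + - c)).
  replace (c + L + - c) with L by ring. exact H. Qed.

Lemma drop1 (u : nat -> R) (L : R) : is_series u L -> is_series (fun k => u (S k)) (L - u O).
Proof. intros H. apply is_series_incr_1.
  change (is_series u (L - u O + u O)).
  replace (L - u O + u O) with L by ring. exact H. Qed.

Lemma exp_ser y : is_series (fun n => ea n * y^n) (exp (-y)).
Proof. eapply is_series_ext; [|apply (is_exp_Reals (-y))]. intros n.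
  rewrite pow_n_pow. change (@eq R ((-y)^n * / INR (fact n)) (ea n * y^n)).
  assert (Hy : forall z : R, (-z)^n = (-1)^n * z^n).
  { intros z. replace (-z) with (-1*z) by ring. apply Rpow_mult_distr. }
  rewrite Hy. unfold ea, Rdiv. ring. Qed.

Lemma rad : CV_radius aa = p_infty.
Proof.
  apply CV_radius_infinite_DAlembert.
  - intros n; unfold aa. pose proof (pos_INR n). pose proof (INR_fact_neq_0 n).
    unfold Rdiv; apply Rmult_integral_contrapositive_currified.
    + apply pow_nonzero; lra.
    + apply Rinv_neq_0_compat; apply Rmult_integral_contrapositive_currified; lra.
  - apply is_lim_seq_le_le with (u := fun _ => 0) (w := fun n => / INR (S n)).
    + intros n. pose proof (pos_INR n) as Hn. pose proof (INR_fact_neq_0 n).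
      assert (Hp : (-1)^n <> 0) by (apply pow_nonzero; lra).
      replace (aa (S n) / aa n) with (- ((2 * INR n + 1) / ((INR n + 1) * (2 * INR n + 3)))).
      2:{ unfold aa. rewrite fact_simpl, mult_INR, S_INR. simpl pow. field. repeat split; lra. }
      rewrite Rabs_Ropp, Rabs_pos_eq.
      2:{ apply Rdiv_le_0_compat; [lra|]. apply Rmult_lt_0_compat; lra. }
      split. { apply Rdiv_le_0_compat; [lra|]. apply Rmult_lt_0_compat; lra. }
      rewrite S_INR.
      assert (/ (INR n + 1) - (2 * INR n + 1) / ((INR n + 1) * (2 * INR n + 3))
               = 2 / ((INR n + 1) * (2 * INR n + 3))) by (field; lra).
      assert (0 <= 2 / ((INR n + 1) * (2 * INR n + 3))).
      { apply Rdiv_le_0_compat; [lra|]. apply Rmult_lt_0_compat; lra. }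
      lra.
    + apply is_lim_seq_const.
    + apply (is_lim_seq_incr_1 (fun n => / INR n)).
      replace (Finite 0) with (Rbar_inv p_infty) by reflexivity.
      apply is_lim_seq_inv; [apply is_lim_seq_INR | discriminate].
Qed.

Lemma key y : PSeries aa y + 2 * y * PSeries (PS_derive aa) y = exp (- y).
Proof.
  assert (H1 : ex_pseries aa y) by (apply CV_radius_inside; rewrite rad; exact I).
  assert (H2 : ex_pseries (PS_derive aa) y) by (apply CV_radius_inside; rewrite CV_radius_derive, rad; exact I).
  apply ex_pseries_R in H1. apply ex_pseries_R in H2.
  destruct H1 as [l1 H1]. destruct H2 as [l2 H2].
  unfold PSeries. rewrite (is_series_unique _ _ H1), (is_series_unique _ _ H2).
  pose proof (shift0 _ _ 0 (lin2 _ _ _ _ (2*y) 0 H2 H2)) as H3.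
  pose proof (lin2 _ _ _ _ 1 1 H1 H3) as H4.
  rewrite <- (is_series_unique _ _ (exp_ser y)). symmetry. apply is_series_unique.
  replace (l1 + 2 * y * l2) with (1 * l1 + 1 * (0 + (2 * y * l2 + 0 * l2))) by ring.
  eapply is_series_ext; [|exact H4]. intros [|m].
  - unfold aa, ea. simpl. match goal with |- ?a = ?b => change (@eq R a b) end. field.
  - unfold aa, ea, PS_derive. pose proof (pos_INR m). pose proof (INR_fact_neq_0 (S m)).
    repeat rewrite S_INR. simpl pow. match goal with |- ?a = ?b => change (@eq R a b) end. field. lra.
Qed.

Lemma deriv t : is_derive (fun t => t * PSeries aa (t^2)) t (exp (- t^2)).
Proof.
  assert (Hd : is_derive (fun t => PSeries aa (t^2)) t (scal (2*t) (PSeries (PS_derive aa) (t^2)))).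
  { apply (is_derive_comp (PSeries aa) (fun t => t^2)).
    - apply is_derive_PSeries. rewrite rad. exact I.
    - auto_derive; [exact I| ring]. }
  pose proof (is_derive_mult (fun t => t) (fun t => PSeries aa (t^2)) t one _ (is_derive_id t) Hd Rmult_comm) as H.
  replace (exp (- t^2)) with (plus (mult one (PSeries aa (t ^ 2))) (mult t (scal (2 * t) (PSeries (PS_derive aa) (t ^ 2))))).
  exact H.
  rewrite <- key. change (1 * PSeries aa (t ^ 2) + t * ((2 * t) * PSeries (PS_derive aa) (t ^ 2)) = PSeries aa (t ^ 2) + 2 * t ^ 2 * PSeries (PS_derive aa) (t ^ 2)). ring.
Qed.

Lemma rint x : RInt (fun l => exp (- l^2)) 0 x = x * PSeries aa (x^2).
Proof.
  apply is_RInt_unique.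
  replace (x * PSeries aa (x^2)) with (minus ((fun t => t * PSeries aa (t^2)) x) ((fun t => t * PSeries aa (t^2)) 0)).
  2:{ change (x * PSeries aa (x^2) - 0 * PSeries aa (0^2) = x * PSeries aa (x^2)). ring. }
  apply (is_RInt_derive (fun t => t * PSeries aa (t^2))).
  - intros t _. apply deriv.
  - intros t _. apply (@ex_derive_continuous R_AbsRing R_NormedModule (fun l => exp (- l^2))). auto_derive. exact I.
Qed.

Ltac req := cbv beta; match goal with |- ?a = ?b => change (@eq R a b) end.

Lemma sc (u : nat -> R) (L c : R) : is_series u L -> is_series (fun n => c * u n) (c * L).
Proof. intros H. exact (is_series_scal c _ _ H). Qed.
Lemma mn (a b : nat -> R) (la lb : R) : is_series a la -> is_series b lb ->
  is_series (fun n => a n - b n) (la - lb).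
Proof. intros Ha Hb. exact (is_series_minus _ _ _ _ Ha Hb). Qed.
Lemma drop1' (u : nat -> R) (L c : R) : u O = c -> is_series u L -> is_series (fun k => u (S k)) (L - c).
Proof. intros E H. rewrite <- E. apply drop1. exact H. Qed.

Lemma exs (s : nat -> R) x L : is_series (fun k => x * s k) L -> x <> 0 -> ex_series s.
Proof. intros H Hx. exists (/x * L). eapply is_series_ext; [|exact (sc _ _ (/x) H)].
  intros n. req. field. exact Hx. Qed.

Lemma exs0 (s : nat -> R) : (forall k, s (S k) = 0) -> ex_series s.
Proof. intros H. exists (s O + 0 * exp 0).
  apply is_series_decr_1.
  change (is_series (fun k => s (S k)) (s O + 0 * exp 0 + - s O)).
  replace (s O + 0 * exp 0 + - s O) with (0 * exp (- 0)) by (rewrite Ropp_0; ring).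
  eapply is_series_ext; [|exact (sc _ _ 0 (exp_ser 0))]. intros n. req. rewrite H. ring. Qed.

Lemma sumR_S s n f : (s <= S n)%nat -> sumR s (S n) f = sumR s n f + f (S n).
Proof. intros Hs. unfold sumR.
  replace (S (S n) - s)%nat with (S (S n - s)) by lia. rewrite seq_S, fold_right_app.
  replace (s + (S n - s))%nat with (S n) by lia. simpl (fold_right _ _ (S n :: nil)).
  generalize (seq s (S n - s)). intros l. induction l as [|a l IH]; simpl; [ring | rewrite IH; ring].
Qed.
Lemma prodR_S s n f : (s <= S n)%nat -> prodR s (S n) f = prodR s n f * f (S n).
Proof. intros Hs. unfold prodR.
  replace (S (S n) - s)%nat with (S (S n - s)) by lia. rewrite seq_S, fold_right_app.
  replace (s + (S n - s))%nat with (S n) by lia. simpl (fold_right _ _ (S n :: nil)).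
  generalize (seq s (S n - s)). intros l. induction l as [|a l IH]; simpl; [ring | rewrite IH; ring].
Qed.

Lemma sum1 r : sumR 1 r (fun i => 2 * INR i + 1) = INR r * INR r + 2 * INR r.
Proof. induction r. unfold sumR; simpl; ring.
  rewrite sumR_S by lia. rewrite IHr, S_INR. ring. Qed.
Lemma sum2 r : sumR 2 (S r) (fun i => INR i) = INR (S r) * INR (S (S r)) / 2 - 1.
Proof. induction r. simpl. unfold sumR. simpl. field.
  rewrite sumR_S by lia. rewrite IHr. repeat rewrite S_INR. field. Qed.
Lemma prod1 k : prodR 1 k (fun r => sumR 1 r (fun i => 2 * INR i + 1))
  = INR (fact k) * INR (fact k) * (INR k + 1) * (INR k + 2) / 2.
Proof. induction k. unfold prodR. simpl. field.
  rewrite prodR_S by lia. rewrite IHk, sum1, fact_simpl, mult_INR. repeat rewrite S_INR. field. Qed.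
Lemma prod2 k : prodR 2 (S k) (fun r => 2 * sumR 2 r (fun i => INR i))
  = INR (fact k) * INR (fact k) * (INR k + 1) * (INR k + 2) * (INR k + 3) / 6.
Proof. induction k. unfold prodR. simpl. field.
  rewrite prodR_S by lia. rewrite IHk, sum2, fact_simpl, mult_INR. repeat rewrite S_INR. field. Qed.

Lemma base x : is_series (fun n => 2 * x * (aa n * (x^2)^n) - x * (ea n * (x^2)^n))
  (2 * x * PSeries aa (x^2) - x * exp (- x^2)).
Proof.
  assert (H1 : ex_pseries aa (x^2)) by (apply CV_radius_inside; rewrite rad; exact I).
  apply ex_pseries_R in H1. apply Series_correct in H1.
  exact (mn _ _ _ _ (sc _ _ (2*x) H1) (sc _ _ x (exp_ser (x^2)))).
Qed.

Lemma erf_eq x : erf x = 2 / sqrt PI * (x * PSeries aa (x^2)).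
Proof. unfold erf. rewrite rint. reflexivity. Qed.

Ltac simp := cbv beta; unfold aa, ea; repeat rewrite fact_simpl; repeat rewrite mult_INR;
  repeat rewrite S_INR; simpl pow.

Lemma id1 x : ex_series (erf_series1 x) /\
  x^3 * Series (erf_series1 x) = 2 * x * PSeries aa (x^2) - x * exp (- x^2) - x.
Proof.
  pose (V := fun n => 2 * x * (aa n * (x^2)^n) - x * (ea n * (x^2)^n)).
  assert (HV : is_series V (2 * x * PSeries aa (x^2) - x * exp (- x^2))) by exact (base x).
  assert (H0 : V O = x) by (unfold V; simp; simpl; field).
  pose proof (drop1' _ _ _ H0 HV) as H.
  assert (Hs : is_series (fun k => x^3 * erf_series1 x k) (2 * x * PSeries aa (x^2) - x * exp (- x^2) - x)).
  { eapply is_series_ext; [|exact H]. intros k. req. unfold V, erf_series1.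
    rewrite pow_mult, Nat.add_1_r. pose proof (pos_INR k). pose proof (INR_fact_neq_0 k).
    simp. field. repeat split; lra. }
  split.
  - destruct (Req_dec x 0) as [Hx|Hx].
    + apply exs0. intros k. unfold erf_series1. rewrite Hx, pow_i by lia. unfold Rdiv. ring.
    + apply (exs _ _ _ Hs). apply pow_nonzero. exact Hx.
  - rewrite <- Series_scal_l. apply is_series_unique. exact Hs.
Qed.

Lemma id2 x : ex_series (erf_series2 x) /\
  x^5 / 6 * Series (erf_series2 x) = 2 * x * PSeries aa (x^2) - x * exp (- x^2)
     - (0 + x / 3 * x^2 * exp (- x^2)) - x - 0.
Proof.
  pose (V := fun n => 2 * x * (aa n * (x^2)^n) - x * (ea n * (x^2)^n)
     - match n with O => 0 | S m => x / 3 * x^2 * (ea m * (x^2)^m) end).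
  assert (HV : is_series V (2 * x * PSeries aa (x^2) - x * exp (- x^2)
     - (0 + x / 3 * x^2 * exp (- x^2))))
    by exact (mn _ _ _ _ (base x) (shift0 _ _ 0 (sc _ _ (x / 3 * x^2) (exp_ser (x^2))))).
  assert (H0 : V O = x) by (unfold V; simp; simpl; field).
  pose proof (drop1' _ _ _ H0 HV) as H.
  assert (H1 : (fun k => V (S k)) O = 0) by (unfold V; simp; simpl; field).
  pose proof (drop1' _ _ _ H1 H) as H'.
  assert (Hs : is_series (fun k => x^5 / 6 * erf_series2 x k) (2 * x * PSeries aa (x^2) - x * exp (- x^2)
     - (0 + x / 3 * x^2 * exp (- x^2)) - x - 0)).
  { eapply is_series_ext; [|exact H']. intros k. req. unfold V, erf_series2.
    rewrite prod1, pow_mult, Nat.add_1_r. pose proof (pos_INR k). pose proof (INR_fact_neq_0 k).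
    simp. field. repeat split; lra. }
  split.
  - destruct (Req_dec x 0) as [Hx|Hx].
    + apply exs0. intros k. unfold erf_series2. rewrite Hx, pow_i by lia. unfold Rdiv. ring.
    + apply (exs _ _ _ Hs). unfold Rdiv. apply Rmult_integral_contrapositive_currified.
      apply pow_nonzero. exact Hx. lra.
  - rewrite <- Series_scal_l. apply is_series_unique. exact Hs.
Qed.

Lemma id3 x : ex_series (erf_series3 x) /\
  x^7 / 60 * Series (erf_series3 x) = 2 * x * PSeries aa (x^2) - x * exp (- x^2)
     - (0 + 11 * x / 30 * x^2 * exp (- x^2)) - (0 + (0 + x / 15 * (x^2)^2 * exp (- x^2)))
     - x - - (x * x^2 / 30) - 0.
Proof.
  pose (V := fun n => 2 * x * (aa n * (x^2)^n) - x * (ea n * (x^2)^n)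
     - match n with O => 0 | S m => 11 * x / 30 * x^2 * (ea m * (x^2)^m) end
     - match n with O => 0 | S n' => match n' with O => 0 | S m => x / 15 * (x^2)^2 * (ea m * (x^2)^m) end end).
  assert (HV : is_series V (2 * x * PSeries aa (x^2) - x * exp (- x^2)
     - (0 + 11 * x / 30 * x^2 * exp (- x^2)) - (0 + (0 + x / 15 * (x^2)^2 * exp (- x^2)))))
    by exact (mn _ _ _ _ (mn _ _ _ _ (base x) (shift0 _ _ 0 (sc _ _ (11 * x / 30 * x^2) (exp_ser (x^2)))))
               (shift0 _ _ 0 (shift0 _ _ 0 (sc _ _ (x / 15 * (x^2)^2) (exp_ser (x^2)))))).
  assert (H0 : V O = x) by (unfold V; simp; simpl; field).
  pose proof (drop1' _ _ _ H0 HV) as H.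
  assert (H1 : (fun k => V (S k)) O = - (x * x^2 / 30)) by (unfold V; simp; simpl; field).
  pose proof (drop1' _ _ _ H1 H) as H'.
  assert (H2 : (fun k => V (S (S k))) O = 0) by (unfold V; simp; simpl; field).
  pose proof (drop1' _ _ _ H2 H') as H''.
  assert (Hs : is_series (fun k => x^7 / 60 * erf_series3 x k) (2 * x * PSeries aa (x^2) - x * exp (- x^2)
     - (0 + 11 * x / 30 * x^2 * exp (- x^2)) - (0 + (0 + x / 15 * (x^2)^2 * exp (- x^2)))
     - x - - (x * x^2 / 30) - 0)).
  { eapply is_series_ext; [|exact H'']. intros k. req. unfold V, erf_series3.
    rewrite Nat.add_1_r, prod2, pow_mult. pose proof (pos_INR k). pose proof (INR_fact_neq_0 k).
    simp. field. repeat split; lra. }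
  split.
  - destruct (Req_dec x 0) as [Hx|Hx].
    + apply exs0. intros k. unfold erf_series3. rewrite Hx, pow_i by lia. unfold Rdiv. ring.
    + apply (exs _ _ _ Hs). unfold Rdiv. apply Rmult_integral_contrapositive_currified.
      apply pow_nonzero. exact Hx. lra.
  - rewrite <- Series_scal_l. apply is_series_unique. exact Hs.
Qed.

Theorem theorem7p2 : forall x : R,
  (ex_series (erf_series1 x) /\
   erf x = x / sqrt PI + x / sqrt PI * exp (- x ^ 2)
           + x ^ 3 / sqrt PI * Series (erf_series1 x)) /\
  (ex_series (erf_series2 x) /\
   erf x = x / sqrt PI + x / sqrt PI * (1 + x ^ 2 / 3) * exp (- x ^ 2)
           + x ^ 5 / (6 * sqrt PI) * Series (erf_series2 x)) /\
  (ex_series (erf_series3 x) /\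
   erf x = x / sqrt PI * (1 - x ^ 2 / 30)
           + x / sqrt PI * (1 + 11 * x ^ 2 / 30 + x ^ 4 / 15) * exp (- x ^ 2)
           + x ^ 7 / (60 * sqrt PI) * Series (erf_series3 x)).
Proof.
  intros x. destruct (id1 x) as [E1 S1]. destruct (id2 x) as [E2 S2]. destruct (id3 x) as [E3 S3].
  assert (Hp : 0 < sqrt PI) by (apply sqrt_lt_R0; apply PI_RGT_0).
  rewrite erf_eq. split; [|split]; (split; [assumption|]).
  - replace (x ^ 3 / sqrt PI * Series (erf_series1 x)) with ((x^3 * Series (erf_series1 x)) / sqrt PI)
      by (field; lra).
    rewrite S1. field. lra.
  - replace (x ^ 5 / (6 * sqrt PI) * Series (erf_series2 x)) with ((x^5 / 6 * Series (erf_series2 x)) / sqrt PI)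
      by (field; lra).
    rewrite S2. field. lra.
  - replace (x ^ 7 / (60 * sqrt PI) * Series (erf_series3 x)) with ((x^7 / 60 * Series (erf_series3 x)) / sqrt PI)
      by (field; lra).
    rewrite S3. field. lra.
Qed.
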